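(* Assume the setting in the context and suppose real numbers $L_{jk}\le U_{jk}$ ($j,k\in\{1,\dots,m\}$) satisfy $L_{jk}\le c^*_{jk}\le U_{jk}$ for all $j,k$, for the covariance matrix $\boldsymbol\Sigma^*=(c^*_{jk})=\mathbf M(\mathbf d^* )^{-1}$ of every $\Phi_{\mathfrak B}$-optimal design $\mathbf d^*$. Consider the mixed-integer linear program in variables $\varphi\in\mathbb R$, $z_{ijk}\in\mathbb R$ ($i\in\{1,\dots,n\}$, $j,k\in\{1,\dots,m\}$), symmetric $\boldsymbol\Sigma=(c_{jk})\in\mathbb R^{m\times m}$ and $\mathbf d\in\{0,1\}^n$: minimize $\varphi$ subject to $\varphi\ge\mathrm{tr}(\mathbf B_\ell'\boldsymbol\Sigma\mathbf B_\ell)$ for all $\ell\in\{1,\dots,K\}$; $\sum_{i=1}^n\mathbf f_i\mathbf f_i'\mathbf Z_i=\mathbf I_m$, where $\mathbf Z_i$ is the $m\times m$ matrix with entries $(\mathbf Z_i)_{jk}=z_{ijk}$; $\sum_i d_i=N$; and for all $i,j,k$: $z_{ijk}-d_iL_{jk}\ge0$, $z_{ijk}-d_iU_{jk}-c_{jk}+U_{jk}\ge0$, $z_{ijk}-d_iU_{jk}\le0$, $z_{ijk}-d_iL_{jk}-c_{jk}+L_{jk}\le0$. Then (i) every feasible point satisfies $z_{ijk}=d_ic_{jk}$ for all $i,j,k$, $\mathbf M(\mathbf d)$ is nonsingular and $\boldsymbol\Sigma=\mathbf M(\mathbf d)^{-1}$; and (ii) the optimal value of this program equals the minimum of $\Phi_{\mathfrak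 B}(\mathbf M(\mathbf d))$ over designs with nonsingular $\mathbf M(\mathbf d)$, and the set of $\mathbf d$-components of optimal solutions of the program is exactly the set of $\Phi_{\mathfrak B}$-optimal designs.
   Context: Let $n,m,N,K$ be positive integers with $2\le m\le N\le n$, and let $\mathbf f_1,\dots,\mathbf f_n\in\mathbb R^m$ span $\mathbb R^m$. A (binary) design is $\mathbf d\in\{0,1\}^n$ with $\sum_i d_i=N$; its information matrix is $\mathbf M(\mathbf d)=\sum_{i=1}^n d_i\mathbf f_i\mathbf f_i'$. For $\ell\in\{1,\dots,K\}$ let $\mathbf B_\ell$ be a real $m\times s_\ell$ matrix, $\mathbf B=(\mathbf B_1,\dots,\mathbf B_K)$, with column space of $\mathbf B$ equal to $\mathbb R^m$ and no zero column. For positive definite $\mathbf M$, $\Phi_{\mathfrak B}(\mathbf M)=\max_{\ell}\mathrm{tr}(\mathbf B_\ell'\mathbf M^{-1}\mathbf B_\ell)$. A $\Phi_{\mathfrak B}$-optimal design minimizes $\Phi_{\mathfrak B}(\mathbf M(\mathbf d))$ over designs $\mathbf d$ with nonsingular $\mathbf M(\mathbf d)$. *)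

(* Defs.v *)
From HB Require Import structures.
From mathcomp Require Import all_boot all_order all_algebra.
Set Implicit Arguments. Unset Strict Implicit. Unset Printing Implicit Defensive.
Import Order.TTheory GRing.Theory Num.Theory.
Local Open Scope ring_scope.

Section Defs.
Variables (R : realFieldType) (n m K : nat).
Variable (s : 'I_K -> nat).

Definition infmx (f : 'I_n -> 'cV[R]_m) (d : 'I_n -> bool) : 'M[R]_m :=
  \sum_(i < n) (d i)%:R *: (f i *m (f i)^T).

Definition is_design (N : nat) (d : 'I_n -> bool) : Prop :=
  (\sum_(i < n) (d i : nat))%N = N.

(* Phi_B(M) = max_l tr(B_l' M^{-1} B_l)  (for K >= 1; the values are
   nonnegative for positive definite M, so the neutral element 0 of the
   iterated max is never the value when K >= 1 and M is positive definite) *)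
Definition PhiB (B : forall l : 'I_K, 'M[R]_(m, s l)) (M : 'M[R]_m) : R :=
  \big[Num.max/0]_(l < K) \tr ((B l)^T *m invmx M *m B l).

Definition Phi_optimal (f : 'I_n -> 'cV[R]_m)
  (B : forall l : 'I_K, 'M[R]_(m, s l)) (N : nat) (d : 'I_n -> bool) : Prop :=
  [/\ is_design N d, infmx f d \in unitmx &
      forall d' : 'I_n -> bool, is_design N d' -> infmx f d' \in unitmx ->
        PhiB B (infmx f d) <= PhiB B (infmx f d')].

Definition milp_feasible (f : 'I_n -> 'cV[R]_m)
  (B : forall l : 'I_K, 'M[R]_(m, s l)) (N : nat) (L U : 'M[R]_m)
  (phi : R) (Z : 'I_n -> 'M[R]_m) (Sigma : 'M[R]_m) (d : 'I_n -> bool) : Prop :=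
  [/\ Sigma^T = Sigma,
      forall l : 'I_K, \tr ((B l)^T *m Sigma *m B l) <= phi,
      \sum_(i < n) (f i *m (f i)^T) *m Z i = 1%:M,
      is_design N d &
      forall (i : 'I_n) (j k : 'I_m),
        [/\ 0 <= Z i j k - (d i)%:R * L j k,
            0 <= Z i j k - (d i)%:R * U j k - Sigma j k + U j k,
            Z i j k - (d i)%:R * U j k <= 0 &
            Z i j k - (d i)%:R * L j k - Sigma j k + L j k <= 0]].

Definition milp_optimal f B N L U phi Z Sigma d : Prop :=
  milp_feasible f B N L U phi Z Sigma d /\
  forall phi' Z' Sigma' d', milp_feasible f B N L U phi' Z' Sigma' d' -> phi <= phi'.

End Defs.

(* Main.v *)
Set Warnings "-all".
Require Import Defs.
From HB Require Import structures.
From mathcomp Require Import all_boot all_order all_algebra zify.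
Set Implicit Arguments. Unset Strict Implicit. Unset Printing Implicit Defensive.
Import Order.TTheory GRing.Theory Num.Theory.
Local Open Scope ring_scope.

Section Aux.
Variables (R : realFieldType) (n m : nat).

Lemma quad_infmx (f : 'I_n -> 'cV[R]_m) (d : 'I_n -> bool) (v : 'rV[R]_m) :
  (v *m infmx f d *m v^T) 0 0 = \sum_i (d i)%:R * ((v *m f i) 0 0)^+2.
Proof.
rewrite /infmx mulmx_sumr mulmx_suml summxE; apply: eq_bigr => i _.
rewrite -scalemxAr -scalemxAl mxE; congr (_ * _).
rewrite mulmxA -(mulmxA _ _ v^T) -trmx_mul [v *m f i]mx11_scalar tr_scalar_mx.
by rewrite -scalar_mxM mxE eqxx mulr1n expr2 !mxE eqxx mulr1n.
Qed.

Lemma quad_ge0 (f : 'I_n -> 'cV[R]_m) (d : 'I_n -> bool) (v : 'rV[R]_m) :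
  0 <= (v *m infmx f d *m v^T) 0 0.
Proof.
rewrite quad_infmx; apply: sumr_ge0 => i _; apply: mulr_ge0 => //.
exact: sqr_ge0.
Qed.


Lemma tr_ge0 (f : 'I_n -> 'cV[R]_m) (d : 'I_n -> bool) (S : 'M[R]_m) p
  (Bm : 'M[R]_(m, p)) :
  S^T = S -> infmx f d *m S = 1%:M -> 0 <= \tr (Bm^T *m S *m Bm).
Proof.
move=> St MS; rewrite /mxtrace; apply: sumr_ge0 => j _.
have -> : (Bm^T *m S *m Bm) j j = ((col j Bm)^T *m S *m col j Bm) 0 0.
  rewrite [LHS]mxE [RHS]mxE; apply: eq_bigr => k _.
  rewrite [in LHS]mxE [in RHS]mxE [X in _ = _ * X]mxE; congr (_ * _).
  by apply: eq_bigr => l _; rewrite !mxE.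
have := quad_ge0 f d ((col j Bm)^T *m S).
by rewrite trmx_mul St trmxK mulmxA -(mulmxA _ (infmx f d) S) MS mulmx1.
Qed.

Lemma set_extend (T : finType) (A : {set T}) k :
  (#|A| <= k <= #|T|)%N -> exists D : {set T}, A \subset D /\ #|D| = k.
Proof.
move Ej: (k - #|A|)%N => j; elim: j A Ej => [|j IH] A Ej /andP[h1 h2].
  by exists A; split=> //; apply/eqP; rewrite eqn_leq h1 -subn_eq0 Ej.
have : (0 < #|~: A|)%N.
  have := cardsC A; lia.
rewrite card_gt0 => /set0Pn [x]; rewrite inE => xA.
have E1 : (k - #|x |: A|)%N = j by rewrite cardsU1 xA /=; lia.
have E2 : (#|x |: A| <= k <= #|T|)%N.
  rewrite cardsU1 xA add1n; apply/andP; split; lia.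
have [D [sD cD]] := IH (x |: A) E1 E2.
by exists D; split=> //; apply: subset_trans sD; apply: subsetUr.
Qed.

Lemma kill_vec (f : 'I_n -> 'cV[R]_m) (d : 'I_n -> bool) (v : 'rV[R]_m) :
  v *m infmx f d = 0 -> forall i, d i -> (v *m f i) 0 0 = 0.
Proof.
move=> vM.
have h0 : \sum_i (d i)%:R * ((v *m f i) 0 0)^+2 = 0 :> R.
  by rewrite -quad_infmx vM mul0mx mxE.
move=> i di.
have /psumr_eq0P /(_ i isT) : \sum_i (d i)%:R * ((v *m f i) 0 0)^+2 = 0 :> R := h0.
rewrite di mul1r => /(_ _)/eqP; rewrite sqrf_eq0 => /(_ _)/eqP; apply.
move=> k _; apply: mulr_ge0 => //; exact: sqr_ge0.
Qed.

Lemma is_design_set N (D : {set 'I_n}) : #|D| = N -> is_design N (fun i => i \in D).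
Proof.
move=> <-; rewrite /is_design -sum1_card [RHS]big_mkcond /=.
by apply: eq_bigr => i _; case: (i \in D).
Qed.

Lemma exists_design (f : 'I_n -> 'cV[R]_m) N :
  (\sum_(i < n) <<(f i)^T>> == 1%:M)%MS -> (m <= N)%N -> (N <= n)%N ->
  exists d, is_design N d /\ infmx f d \in unitmx.
Proof.
move=> /andP[_ hsp] hmN hNn.
pose F := \matrix_(i < n, j < m) f i j 0.
have rF : forall i, row i F = (f i)^T by move=> i; apply/rowP => j; rewrite !mxE.
have fF : row_full F.
  rewrite -sub1mx (submx_trans hsp) //; apply/sumsmx_subP => i _.
  by rewrite genmxE -rF row_sub.
pose g := fullrankfun fF.
have Gu : (rowsub g F)^T \in unitmx by rewrite unitmx_tr fullrowsub_unit.
have [D [sD cD]] : exists D : {set 'I_n}, [set g k | k : 'I_m] \subset D /\ #|D| = N.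
  apply: set_extend; rewrite card_imset; last exact: fullrankfun_inj.
  by rewrite card_ord card_ord hmN hNn.
exists (fun i => i \in D); split; first exact: is_design_set.
rewrite -row_free_unit -kermx_eq0 -submx0; apply/row_subP => r.
set v := row r _.
have vM : v *m infmx f (fun i => i \in D) = 0.
  by rewrite /v -row_mul mulmx_ker row0.
have vG : v *m (rowsub g F)^T = 0.
  apply/rowP => k; rewrite mxE [RHS]mxE.
  transitivity ((v *m f (g k)) 0 0).
    by rewrite [RHS]mxE; apply: eq_bigr => j _; rewrite !mxE.
  apply: (kill_vec vM); apply: (subsetP sD); exact: imset_f.
have -> : v = 0 by rewrite -(mulmxK Gu v) vG mul0mx.
by rewrite sub0mx.
Qed.
End Aux.

From mathcomp Require Import lra.

Section Main.
Variables (R : realFieldType) (n m N K : nat) (s : 'I_K -> nat)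
  (f : 'I_n -> 'cV[R]_m) (B : forall l : 'I_K, 'M[R]_(m, s l)) (L U : 'M[R]_m).

Lemma infmx_sym d : (infmx f d)^T = infmx f d.
Proof.
rewrite /infmx raddf_sum; apply: eq_bigr => i _.
apply/matrixP=> a b; rewrite !mxE; congr (_ * _).
by apply: eq_bigr => k _; rewrite !mxE mulrC.
Qed.

Lemma feas_i phi Z Sigma d : milp_feasible f B N L U phi Z Sigma d ->
  [/\ forall (i : 'I_n) (j k : 'I_m), Z i j k = (d i)%:R * Sigma j k,
      infmx f d \in unitmx & Sigma = invmx (infmx f d)].
Proof.
case=> St Htr Hsum Hdes Hb.
have HZ : forall (i : 'I_n) (j k : 'I_m), Z i j k = (d i)%:R * Sigma j k.
  move=> i j k; have [h1 h2 h3 h4] := Hb i j k.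
  by move: h1 h2 h3 h4; case: (d i); rewrite ?mul1r ?mul0r; lra.
have HZ' : forall i, Z i = (d i)%:R *: Sigma.
  by move=> i; apply/matrixP => j k; rewrite mxE HZ.
have MS : infmx f d *m Sigma = 1%:M.
  rewrite -Hsum /infmx mulmx_suml; apply: eq_bigr => i _.
  by rewrite HZ' -scalemxAl scalemxAr.
have [Mu _] := mulmx1_unit MS.
split=> //.
by rewrite -(mulKmx Mu Sigma) MS mulmx1.
Qed.

Lemma feas_ge phi Z Sigma d : (0 < K)%N -> milp_feasible f B N L U phi Z Sigma d ->
  PhiB B (infmx f d) <= phi.
Proof.
move=> K0 Hf; have [_ Mu SE] := feas_i Hf.
case: Hf => St Htr _ _ _.
have MS : infmx f d *m Sigma = 1%:M by rewrite SE mulmxV.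
rewrite /PhiB; apply: bigmax_le => [|l _]; last by rewrite SE in Htr; exact: Htr.
apply: le_trans (Htr (Ordinal K0)); exact: tr_ge0 St MS.
Qed.

Lemma feas_of_opt d : (forall j k : 'I_m, L j k <= invmx (infmx f d) j k <= U j k) ->
  is_design N d -> infmx f d \in unitmx ->
  milp_feasible f B N L U (PhiB B (infmx f d))
    (fun i => (d i)%:R *: invmx (infmx f d)) (invmx (infmx f d)) d.
Proof.
move=> hLU hd Mu; split=> //.
- by rewrite trmx_inv infmx_sym.
- by move=> l; rewrite /PhiB; apply: (le_bigmax _ (fun l => \tr ((B l)^T *m invmx (infmx f d) *m B l))).
- rewrite -(mulmxV Mu) /infmx mulmx_suml; apply: eq_bigr => i _.
  by rewrite -scalemxAl scalemxAr.
- move=> i j k; have /andP[h1 h2] := hLU j k; rewrite mxE.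
  by case: (d i); rewrite ?mul1r ?mul0r; split; lra.
Qed.

End Main.

Lemma infmx_ffun (R : realFieldType) n m (f : 'I_n -> 'cV[R]_m) (d : 'I_n -> bool) :
  infmx f (finfun d) = infmx f d.
Proof. by apply: eq_bigr => i _; rewrite ffunE. Qed.

Unset Implicit Arguments. Set Strict Implicit.

Theorem mainTheorem7 (R : realFieldType) (n m N K : nat) (s : 'I_K -> nat)
  (f : 'I_n -> 'cV[R]_m) (B : forall l : 'I_K, 'M[R]_(m, s l)) (L U : 'M[R]_m) :
  (2 <= m)%N -> (m <= N)%N -> (N <= n)%N -> (0 < K)%N ->
  (* f_1, ..., f_n span R^m *)
  (\sum_(i < n) <<(f i)^T>> == 1%:M)%MS ->
  (* the column space of B = (B_1, ..., B_K) is R^m *)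
  (\sum_(l < K) <<(B l)^T>> == 1%:M)%MS ->
  (* B has no zero column *)
  (forall (l : 'I_K) (j : 'I_(s l)), col j (B l) != 0) ->
  (forall j k : 'I_m, L j k <= U j k) ->
  (forall d : 'I_n -> bool, Phi_optimal f B N d ->
     forall j k : 'I_m, L j k <= invmx (infmx f d) j k <= U j k) ->
  (* (i) *)
  (forall phi Z Sigma d, milp_feasible f B N L U phi Z Sigma d ->
     [/\ forall (i : 'I_n) (j k : 'I_m), Z i j k = (d i)%:R * Sigma j k,
         infmx f d \in unitmx &
         Sigma = invmx (infmx f d)]) /\
  (* (ii) *)
  ((exists d, Phi_optimal f B N d) /\
   (forall dstar, Phi_optimal f B N dstar ->
      (forall phi Z Sigma d, milp_feasible f B N L U phi Z Sigma d ->
         PhiB B (infmx f dstar) <= phi) /\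
      (exists phi Z Sigma d, milp_optimal f B N L U phi Z Sigma d /\
         phi = PhiB B (infmx f dstar))) /\
   (forall d : 'I_n -> bool,
      (exists phi Z Sigma, milp_optimal f B N L U phi Z Sigma d) <->
      Phi_optimal f B N d)).
Proof.
move=> hm2 hmN hNn K0 hsp _ _ _ hopt.
have Hi : forall phi Z Sigma d, milp_feasible f B N L U phi Z Sigma d ->
     [/\ forall (i : 'I_n) (j k : 'I_m), Z i j k = (d i)%:R * Sigma j k,
         infmx f d \in unitmx & Sigma = invmx (infmx f d)].
  by move=> phi Z Sigma d H; exact: feas_i H.
split=> //.
have Hex : exists d, Phi_optimal f B N d.
  have [d0 [hd0 hu0]] := exists_design hsp hmN hNn.
  pose P := [pred d : {ffun 'I_n -> bool} |
              ((\sum_i (d i : nat))%N == N) && (infmx f d \in unitmx)].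
  have P0 : P (finfun d0).
    rewrite /P /= infmx_ffun hu0 andbT; apply/eqP; rewrite -hd0.
    by apply: eq_bigr => i _; rewrite ffunE.
  case: (arg_minP (fun d : {ffun 'I_n -> bool} => PhiB B (infmx f d)) P0).
  move=> dm /andP[/eqP Pd Pu] Hmin; exists dm; split=> // d' hd' hu'.
  rewrite -(infmx_ffun f d'); apply: Hmin; rewrite /P /= infmx_ffun hu' andbT.
  by apply/eqP; rewrite -hd'; apply: eq_bigr => i _; rewrite ffunE.
have Hlow : forall dstar, Phi_optimal f B N dstar ->
    forall phi Z Sigma d, milp_feasible f B N L U phi Z Sigma d ->
      PhiB B (infmx f dstar) <= phi.
  move=> dstar [_ _ Hd] phi Z Sigma d Hf.
  have [_ Mu _] := Hi _ _ _ _ Hf.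
  have hd : is_design N d by case: Hf.
  exact: le_trans (Hd d hd Mu) (feas_ge K0 Hf).
have Hfeas : forall dstar, Phi_optimal f B N dstar ->
    milp_optimal f B N L U (PhiB B (infmx f dstar))
      (fun i => (dstar i)%:R *: invmx (infmx f dstar)) (invmx (infmx f dstar)) dstar.
  move=> dstar Ho; split; last exact: Hlow Ho.
  have [hd hu _] := Ho.
  by apply: feas_of_opt => //; exact: hopt.
split=> //; split.
  move=> dstar Ho; split; first exact: Hlow Ho.
  by exists (PhiB B (infmx f dstar)), (fun i => (dstar i)%:R *: invmx (infmx f dstar)),
    (invmx (infmx f dstar)), dstar; split=> //; exact: Hfeas.
move=> d; split; last first.
  by move=> Ho; do 3 eexists; exact: Hfeas Ho.
case=> phi [Z [Sigma [Hf Hmin]]].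
have [_ Mu _] := Hi _ _ _ _ Hf.
have hd : is_design N d by case: Hf.
have [dstar Hs] := Hex.
split=> // d' hd' hu'.
apply: le_trans (feas_ge K0 Hf) _.
apply: le_trans (Hmin _ _ _ _ (proj1 (Hfeas _ Hs))) _.
by case: Hs => _ _; apply.
Qed.
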